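(* For every set $\Gamma\cup\{\varphi\}$ of formulas over $\Sigma^\circ$: if $\Gamma\vdash_{\bf mbCcl}\varphi$ then $\Gamma\vDash^{\mathsf{RN}}_{\mathcal{M}_{\bf mbCcl}}\varphi$.
   Context: $\Sigma^\circ$ is the signature with unary $\neg,\circ$ and binary $\wedge,\vee,\to$; formulas are built from a denumerable set of propositional variables. ${\bf mbCcl}$ is the Hilbert calculus with Modus Ponens as only rule and axiom schemata: (Ax1) $\alpha\to(\beta\to\alpha)$; (Ax2) $(\alpha\to(\beta\to\gamma))\to((\alpha\to\beta)\to(\alpha\to\gamma))$; (Ax3) $\alpha\to(\beta\to(\alpha\wedge\beta))$; (Ax4) $(\alpha\wedge\beta)\to\alpha$; (Ax5) $(\alpha\wedge\beta)\to\beta$; (Ax6) $\alpha\to(\alpha\vee\beta)$; (Ax7) $\beta\to(\alpha\vee\beta)$; (Ax8) $(\alpha\to\gamma)\to((\beta\to\gamma)\to((\alpha\vee\beta)\to\gamma))$; (Ax9) $\alpha\vee\neg\alpha$; $\alpha\vee(\alpha\to\beta)$; (bc1) $\circ\alpha\to(\alpha\to(\neg\alpha\to\beta))$; (cl) $\neg(\alpha\wedge\neg\alpha)\to\circ\alpha$. $\Gamma\vdash_{\bf mbCcl}\varphi$ means derivability from $\Gamma$. $\mathcal{A}_{\bf mbCcl}$ is the $\Sigma^\circ$-multialgebra with universe $\{F,t,T\}$, $D=\{t,T\}$, $U=\{F\}$, and multioperations: $x\tilde\vee y=U$ if $x=y=F$, otherwise $D$; $x\tilde\wedge y=U$ if $F\in\{x,y\}$,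 otherwise $D$; $\tilde\neg F=D$, $\tilde\neg t=D$, $\tilde\neg T=U$; $x\tilde\to y=D$ if $x=F$, $x\tilde\to F=U$ if $x\in\{t,T\}$, $x\tilde\to y=D$ if $x,y\in\{t,T\}$; $\tilde\circ F=D$, $\tilde\circ t=U$, $\tilde\circ T=D$. A valuation is a map $\nu$ from formulas to $\{F,t,T\}$ with $\nu(\#\alpha)\in\tilde\#\nu(\alpha)$ for unary $\#$ and $\nu(\alpha\#\beta)\in\nu(\alpha)\tilde\#\nu(\beta)$ for binary $\#$. $\mathcal{F}_{\bf mbCcl}$ is the set of valuations $\nu$ such that $\nu(\alpha)=t$ implies $\nu(\alpha\wedge\neg\alpha)=T$, for every formula $\alpha$. $\mathcal{M}_{\bf mbCcl}=(\mathcal{A}_{\bf mbCcl},D,\mathcal{F}_{\bf mbCcl})$, and $\Gamma\vDash^{\mathsf{RN}}_{\mathcal{M}_{\bf mbCcl}}\varphi$ iff every $\nu\in\mathcal{F}_{\bf mbCcl}$ with $\nu[\Gamma]\subseteq D$ satisfies $\nu(\varphi)\in D$. *)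

(* Defs.v *)
Inductive formula : Type :=
| Var : nat -> formula
| Neg : formula -> formula
| Circ : formula -> formula
| And : formula -> formula -> formula
| Or : formula -> formula -> formula
| Imp : formula -> formula -> formula.

Inductive mbCcl_axiom : formula -> Prop :=
| Ax1 : forall a b, mbCcl_axiom (Imp a (Imp b a))
| Ax2 : forall a b c, mbCcl_axiom
    (Imp (Imp a (Imp b c)) (Imp (Imp a b) (Imp a c)))
| Ax3 : forall a b, mbCcl_axiom (Imp a (Imp b (And a b)))
| Ax4 : forall a b, mbCcl_axiom (Imp (And a b) a)
| Ax5 : forall a b, mbCcl_axiom (Imp (And a b) b)
| Ax6 : forall a b, mbCcl_axiom (Imp a (Or a b))
| Ax7 : forall a b, mbCcl_axiom (Imp b (Or a b))
| Ax8 : forall a b c, mbCcl_axiom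
    (Imp (Imp a c) (Imp (Imp b c) (Imp (Or a b) c)))
| Ax9 : forall a, mbCcl_axiom (Or a (Neg a))
| Ax10 : forall a b, mbCcl_axiom (Or a (Imp a b))
| Axbc1 : forall a b, mbCcl_axiom (Imp (Circ a) (Imp a (Imp (Neg a) b)))
| Axcl : forall a, mbCcl_axiom (Imp (Neg (And a (Neg a))) (Circ a)).

Inductive derivable (Gamma : formula -> Prop) : formula -> Prop :=
| d_prem : forall f, Gamma f -> derivable Gamma f
| d_ax : forall f, mbCcl_axiom f -> derivable Gamma f
| d_mp : forall a b, derivable Gamma a -> derivable Gamma (Imp a b) -> derivable Gamma b.

Inductive tv : Type := F | tt_ | TT.
Notation t := tt_.

Definition designated (x : tv) : Prop := x = t \/ x = TT.

(* Multioperations, as set-valued functions: op x y z means z is in x op~ y *)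
Definition in_D (z : tv) : Prop := designated z.
Definition in_U (z : tv) : Prop := z = F.

Definition m_or (x y z : tv) : Prop :=
  if (match x, y with F, F => true | _, _ => false end) then in_U z else in_D z.
Definition m_and (x y z : tv) : Prop :=
  match x, y with
  | F, _ => in_U z
  | _, F => in_U z
  | _, _ => in_D z
  end.
Definition m_neg (x z : tv) : Prop :=
  match x with F => in_D z | tt_ => in_D z | TT => in_U z end.
Definition m_imp (x y z : tv) : Prop :=
  match x, y with
  | F, _ => in_D z
  | _, F => in_U z
  | _, _ => in_D z
  end.
Definition m_circ (x z : tv) : Prop :=
  match x with F => in_D z | tt_ => in_U z | TT => in_D z end.

Definition valuation (v : formula -> tv) : Prop :=
  forall a b,
    m_neg (v a) (v (Neg a)) /\
    m_circ (v a) (v (Circ a)) /\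
    m_and (v a) (v b) (v (And a b)) /\
    m_or (v a) (v b) (v (Or a b)) /\
    m_imp (v a) (v b) (v (Imp a b)).

Definition F_mbCcl (v : formula -> tv) : Prop :=
  valuation v /\ (forall a, v a = t -> v (And a (Neg a)) = TT).

Definition RN_consequence (Gamma : formula -> Prop) (phi : formula) : Prop :=
  forall v, F_mbCcl v -> (forall g, Gamma g -> designated (v g)) -> designated (v phi).

(* Main.v *)
Require Import Defs.
From Stdlib Require Import Setoid.

Ltac simp := unfold m_neg, m_circ, m_and, m_or, m_imp, in_D, in_U, designated in *.

Lemma impD v a b : valuation v -> designated (v (Imp a b)) <-> (v a = F \/ designated (v b)).
Proof. intros H. destruct (H a b) as (_&_&_&_&H1). simp.
  destruct (v a), (v b), (v (Imp a b)); intuition congruence. Qed.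

Lemma ax_sound v f : F_mbCcl v -> mbCcl_axiom f -> designated (v f).
Proof.
  intros [Hv Hcl] Hax.
  assert (HI := fun a b => impD v a b Hv).
  destruct Hax.
  - rewrite !HI. destruct (v a) eqn:E; unfold designated; auto.
  - assert (ND : forall x, v x = F \/ designated (v x)).
    { intro x. unfold designated. destruct (v x); auto. }
    assert (NF : forall x, v x = F -> ~ designated (v x)).
    { intros x E. rewrite E. unfold designated. intuition discriminate. }
    apply HI. destruct (ND (Imp a (Imp b c))) as [E|E]; [left; exact E|right].
    apply HI. destruct (ND (Imp a b)) as [E2|E2]; [left; exact E2|right].
    apply HI. destruct (ND a) as [E3|E3]; [left; exact E3|right].
    apply HI in E. apply HI in E2.
    destruct E as [E|E]; [exfalso; exact (NF _ E E3)|].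
    destruct E2 as [E2|E2]; [exfalso; exact (NF _ E2 E3)|].
    apply HI in E. destruct E as [E|E]; [exfalso; exact (NF _ E E2)|exact E].
  - rewrite !HI. destruct (Hv a b) as (_&_&H&_). simp.
    destruct (v a), (v b), (v (And a b)); intuition congruence.
  - rewrite !HI. destruct (Hv a b) as (_&_&H&_). simp.
    destruct (v a), (v b), (v (And a b)); intuition congruence.
  - rewrite !HI. destruct (Hv a b) as (_&_&H&_). simp.
    destruct (v a), (v b), (v (And a b)); intuition congruence.
  - rewrite !HI. destruct (Hv a b) as (_&_&_&H&_). simp.
    destruct (v a), (v b), (v (Or a b)); intuition congruence.
  - rewrite !HI. destruct (Hv a b) as (_&_&_&H&_). simp.
    destruct (v a), (v b), (v (Or a b)); intuition congruence.
  - assert (ND : forall x, v x = F \/ designated (v x)).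
    { intro x. unfold designated. destruct (v x); auto. }
    assert (NF : forall x, v x = F -> ~ designated (v x)).
    { intros x E. rewrite E. unfold designated. intuition discriminate. }
    destruct (Hv a b) as (_&_&_&H&_).
    apply HI. destruct (ND (Imp a c)) as [E|E]; [left; exact E|right].
    apply HI. destruct (ND (Imp b c)) as [E2|E2]; [left; exact E2|right].
    apply HI in E. apply HI in E2. apply HI.
    destruct (ND c) as [E3|E3]; [|right; exact E3].
    destruct E as [E|E]; [|exfalso; exact (NF _ E3 E)].
    destruct E2 as [E2|E2]; [|exfalso; exact (NF _ E3 E2)].
    left. unfold m_or, in_U in H. rewrite E, E2 in H. exact H.
  - destruct (Hv a (Neg a)) as (Hn&_&_&H&_). simp.
    destruct (v a), (v (Neg a)), (v (Or a (Neg a))); intuition congruence.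
  - destruct (Hv a (Imp a b)) as (_&_&_&H&_). destruct (Hv a b) as (_&_&_&_&H2). simp.
    destruct (v a), (v b), (v (Imp a b)), (v (Or a (Imp a b))); intuition congruence.
  - rewrite !HI. destruct (Hv a a) as (Hn&Hc&_). simp.
    destruct (v a), (v b), (v (Neg a)), (v (Circ a)); intuition congruence.
  - rewrite !HI. destruct (Hv a a) as (_&Hc&_).
    destruct (Hv (And a (Neg a)) a) as (Hn&_). simp.
    destruct (v a) eqn:E.
    + destruct (v (Circ a)); intuition congruence.
    + rewrite (Hcl a E) in Hn. intuition.
    + destruct (v (Circ a)); intuition congruence.
Qed.

Theorem mainTheorem3 (Gamma : formula -> Prop) (phi : formula) :
  derivable Gamma phi -> RN_consequence Gamma phi.
Proof.
  intros D v Hv HG. induction D.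
  - auto.
  - apply ax_sound; auto.
  - destruct Hv as [Hv' _]. apply (impD v a b Hv') in IHD2.
    destruct IHD2 as [E|E]; auto. destruct IHD1; congruence.
Qed.
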